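(* Let $\Sigma$ be an alphabet with $|\Sigma|\ge 3$. A function $f\colon\Sigma^*\to\Sigma^*$ is congruence preserving if and only if it is RCP.
   Context: $\Sigma^*$ denotes the free monoid over $\Sigma$ (finite words, concatenation, empty word $\varepsilon$). A congruence on $\Sigma^*$ is an equivalence relation $\sim$ such that $u\sim v$ and $u'\sim v'$ imply $uu'\sim vv'$. A function $f\colon(\Sigma^* )^k\to\Sigma^*$ is congruence preserving (CP) if for every congruence $\sim$ on $\Sigma^*$ and all $u_i\sim v_i$ ($i=1,\ldots,k$), $f(u_1,\ldots,u_k)\sim f(v_1,\ldots,v_k)$. A restricted congruence on $\Sigma^*$ is the kernel $\{(u,v)\mid \varphi(u)=\varphi(v)\}$ of a monoid morphism $\varphi\colon\Sigma^*\to\Sigma^*$. A function $f\colon(\Sigma^* )^k\to\Sigma^*$ is RCP if for every monoid morphism $\varphi\colon\Sigma^*\to\Sigma^*$ and all $u_1,\ldots,u_k,v_1,\ldots,v_k$ with $\varphi(u_i)=\varphi(v_i)$ for all $i$, we have $\varphi(f(u_1,\ldots,u_k))=\varphi(f(v_1,\ldots,v_k))$. *)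

(* Defs.v *)
From mathcomp Require Import all_boot.
Set Implicit Arguments. Unset Strict Implicit. Unset Printing Implicit Defensive.

Definition is_congruence (Sigma : Type) (R : seq Sigma -> seq Sigma -> Prop) : Prop :=
  [/\ (forall u, R u u),
      (forall u v, R u v -> R v u),
      (forall u v w, R u v -> R v w -> R u w) &
      (forall u v u' v', R u v -> R u' v' -> R (u ++ u') (v ++ v'))].

Definition congruence_preserving (Sigma : Type) (f : seq Sigma -> seq Sigma) : Prop :=
  forall R, is_congruence R -> forall u v, R u v -> R (f u) (f v).

Definition monoid_morphism (Sigma : Type) (phi : seq Sigma -> seq Sigma) : Prop :=
  phi [::] = [::] /\ forall u v, phi (u ++ v) = phi u ++ phi v.

(* RCP: preserves every restricted congruence (kernel of a monoid endomorphism). *)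
Definition RCP (Sigma : Type) (f : seq Sigma -> seq Sigma) : Prop :=
  forall phi, monoid_morphism phi ->
    forall u v, phi u = phi v -> phi (f u) = phi (f v).

(* Main.v *)
Require Import Defs.
From mathcomp Require Import all_boot.
Set Implicit Arguments. Unset Strict Implicit. Unset Printing Implicit Defensive.

Definition mor {S : eqType} (h : S -> seq S) (u : seq S) := flatten (map h u).
Lemma mor_cat {S : eqType} (h : S -> seq S) u v : mor h (u ++ v) = mor h u ++ mor h v.
Proof. by rewrite /mor map_cat flatten_cat. Qed.
Lemma mor_cons {S : eqType} (h : S -> seq S) l u : mor h (l :: u) = h l ++ mor h u.
Proof. by []. Qed.
Lemma mor_mm {S : eqType} (h : S -> seq S) : Defs.monoid_morphism (mor h).
Proof. split=> //; exact: mor_cat. Qed.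
Definition evg {S : eqType} (g : S -> seq S) (t : seq (option S)) u :=
  flatten (map (fun o => match o with Some l => g l | None => u end) t).
Definition ev {S : eqType} t (u : seq S) := evg (fun l => [:: l]) t u.
Lemma mor_evg {S : eqType} (h : S -> seq S) g t u :
  mor h (evg g t u) = evg (fun l => mor h (g l)) t (mor h u).
Proof. by elim: t => [|[l|] t IH] //=; rewrite mor_cat IH. Qed.

Lemma catsI' {S : eqType} (s x y : seq S) : s ++ x = s ++ y -> x = y.
Proof. by elim: s => //= ? ? IH [] /IH. Qed.

Definition fs {S : eqType} (x y l : S) := if l == x then y else l.
Definition sub {S : eqType} (x y : S) := fun l => [:: fs x y l].
Lemma mor_sub {S : eqType} (x y : S) s : mor (sub x y) s = map (fs x y) s.
Proof. by elim: s => //= l s <-. Qed.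
Definition era {S : eqType} (x : S) := fun l => if l == x then [::] else [:: l].
Definition subw {S : eqType} (z : S) w := fun l => if l == z then w else [:: l].

Lemma ev_cong {S : eqType} (R : seq S -> seq S -> Prop) t u v :
  is_congruence R -> R u v -> R (ev t u) (ev t v).
Proof.
move=> [Hr _ _ Hc] Huv; elim: t => [|[l|] t IH] /=; first exact: Hr.
  by apply: Hc.
by apply: Hc.
Qed.

Lemma rcp_mor {S : eqType} (f : seq S -> seq S) : RCP f ->
  forall h u v, mor h u = mor h v -> mor h (f u) = mor h (f v).
Proof. by move=> Hr h; apply: Hr (mor_mm h). Qed.

Lemma transfer {S : eqType} (f : seq S -> seq S) t h u v : RCP f ->
  mor h u = mor h v -> f v = ev t v -> mor h (f u) = mor h (ev t u).
Proof. by move=> Hr Huv Hv; rewrite (rcp_mor Hr Huv) Hv /ev !mor_evg Huv. Qed.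

Lemma inj_src {S : eqType} (x y z : S) : y != z -> y != x -> z != x ->
  forall s s', map (fs y x) s = map (fs y x) s' -> map (fs z x) s = map (fs z x) s' -> s = s'.
Proof.
move=> yz yx zx; elim=> [|l s IH] [|l' s'] //= [E1 /IH H1] [E2 /H1 ->].
congr (_ :: _); move: E1 E2; rewrite /fs.
repeat case: eqP => ? //; subst => //.
all: intros; subst; rewrite ?eqxx in yz yx zx; done.
Qed.

Lemma inj_era {S : eqType} (third : forall p q : S, exists r, r != p /\ r != q) (s s' : seq S) :
  (forall r, mor (era r) s = mor (era r) s') -> s = s'.
Proof.
elim: s s' => [|l s IH] [|l' s'] H //.
- case: (third l' l') => r [r1 _]; move: (H r).
  by rewrite /mor /= /era eq_sym (negbTE r1).
- case: (third l l) => r [r1 _]; move: (H r).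
  by rewrite /mor /= /era eq_sym (negbTE r1).
- case: (eqVneq l l') H => [<-|ne] H.
    congr (_ :: _); apply: IH => r; move: (H r); rewrite !mor_cons.
    exact: catsI'.
  case: (third l l') => r [rl rl']; move: (H r).
  rewrite !mor_cons /era eq_sym (negbTE rl) eq_sym (negbTE rl') /=.
  by case=> E; rewrite E eqxx in ne.
Qed.

Lemma pair_aux {S : eqType} (x y z q : S) (s s' : seq S) : x != y -> z != x -> z != y -> q != z ->
  mor (subw z [:: x; y]) (z :: s) = mor (subw z [:: x; y]) (q :: s') ->
  mor (era x) (z :: s) = mor (era x) (q :: s') -> False.
Proof.
move=> xy zx zy qz; rewrite !mor_cons /subw /era eqxx (negbTE qz) (negbTE zx) /=.
case=> <- E; rewrite eqxx /=.
case: s' E => [|m s'] //; rewrite !mor_cons /=.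
case: (eqVneq m z) => [->|mz] /=.
  by case=> E; rewrite E eqxx in xy.
case=> <- _; rewrite eq_sym (negbTE xy) /=.
by case=> E; rewrite E eqxx in zy.
Qed.

Lemma inj_pair {S : eqType} (x y z : S) (s s' : seq S) : x != y -> z != x -> z != y ->
  mor (subw z [:: x; y]) s = mor (subw z [:: x; y]) s' ->
  mor (era x) s = mor (era x) s' -> s = s'.
Proof.
move=> xy zx zy; elim: s s' => [|l s IH] [|l' s'] //.
- by rewrite /mor /= /subw; case: ifP.
- by rewrite /mor /= /subw; case: ifP.
case: (eqVneq l l') => [<-|ne].
  rewrite !mor_cons => /catsI' E1 /catsI' E2; congr (_ :: _); exact: IH.
case: (eqVneq l z) => [lz|lz].
  subst l => E1 E2; exfalso; apply: (pair_aux xy zx zy _ E1 E2); by rewrite eq_sym.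
case: (eqVneq l' z) => [l'z|l'z].
  subst l' => E1 E2; exfalso; apply: (pair_aux xy zx zy lz (esym E1) (esym E2)).
rewrite !mor_cons /subw (negbTE lz) (negbTE l'z) /=.
by case=> E; rewrite E eqxx in ne.
Qed.

Lemma size_era {S : eqType} (x : S) s : size (mor (era x) s) <= size s.
Proof. elim: s => //= l s IH; rewrite mor_cons size_cat /era; case: ifP => _ /=; by rewrite ?ltnS ?leqW. Qed.

Lemma era_idem {S : eqType} (x : S) s : mor (era x) (mor (era x) s) = mor (era x) s.
Proof.
elim: s => //= l s IH; rewrite mor_cons mor_cat IH /era; case: (eqVneq l x) => //= lx.
by rewrite mor_cons /era (negbTE lx).
Qed.

Lemma nseqS_cat {S : eqType} n (x : S) w : nseq n.+1 x ++ w = nseq n x ++ x :: w.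
Proof. by elim: n => //= n <-. Qed.

Lemma adj_or_const {S : eqType} (s : seq S) :
  (exists p x y q, s = p ++ x :: y :: q /\ x != y) \/
  (exists x, s = nseq (size s) x) \/ s = [::].
Proof.
elim: s => [|l s [[p [x [y [q [-> nxy]]]]]|[[x Hx]|->]]].
- by right; right.
- by left; exists (l :: p), x, y, q.
- case: s Hx => [|m s'] Hx; first by right; left; exists l.
  case: Hx => -> Hs'.
  case: (eqVneq l x) => [->|lx].
    by right; left; exists x; rewrite /= -Hs'.
  by left; exists [::], l, x, s'.
- by right; left; exists l.
Qed.

Lemma pw {S : eqType} (a b c x1 x2 x3 : S) : a != b -> a != c -> b != c ->
  fs c a x1 = fs c a x2 -> fs c b x1 = fs c b x3 -> fs a b x2 = fs a b x3 ->
  ((x1 == c) && (x2 == a)) || (x1 == x2).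
Proof.
move=> ab ac bc; rewrite /fs.
case: (eqVneq x1 c) => [e1|n1].
  case: (eqVneq x2 c) => [e2|n2]; first by rewrite e1 e2 eqxx orbT.
  by move=> <- _ _; rewrite eqxx.
case: (eqVneq x2 c) => [e2|n2] E1; last by rewrite E1 eqxx orbT.
subst x1 x2; rewrite [c == a]eq_sym (negbTE ac).
case: (eqVneq x3 c) => [->|n3].
  by move=> E; rewrite E eqxx in ab.
case: (eqVneq x3 a) => [->|n4] E2.
  by move=> E; rewrite E eqxx in bc.
by rewrite E2 eqxx in n4.
Qed.

Definition tmpl {S : eqType} (c a : S) s1 s2 : seq (option S) :=
  map (fun p => if (p.1 == c) && (p.2 == a) then None else Some p.1) (zip s1 s2).

Lemma build {S : eqType} (a b c : S) : a != b -> a != c -> b != c ->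
  forall s1 s2 s3, map (fs c a) s1 = map (fs c a) s2 -> map (fs c b) s1 = map (fs c b) s3 ->
  map (fs a b) s2 = map (fs a b) s3 ->
  ev (tmpl c a s1 s2) [:: c] = s1 /\ ev (tmpl c a s1 s2) [:: a] = s2.
Proof.
move=> ab ac bc; elim=> [|x1 s1 IH] [|x2 s2] [|x3 s3] //= [E1 /IH H1] [E2 /H1 H2] [E3 /H2 [Hc Ha]].
have P := pw ab ac bc E1 E2 E3.
move: Hc Ha; rewrite /ev /evg /= => -> ->.
case: ifP => [/andP[/eqP -> /eqP ->]|N] //.
by case/orP: P => [Q|/eqP ->] //; rewrite Q in N.
Qed.

Lemma poly_of_RCP (S : finType) (h3 : 3 <= #|S|) (f : seq S -> seq S) :
  RCP f -> exists t, forall u, f u = ev t u.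
Proof.
move=> Hr.
have [a [b [c [ab [ac bc]]]]] : exists a b c : S, a != b /\ a != c /\ b != c.
  move: h3; rewrite cardE; have := enum_uniq S.
  case: (enum S) => [|a [|b [|c s]]] //= U _.
  exists a, b, c; move: U; rewrite !inE !negb_or.
  by case/andP=> /and3P [-> -> _] /andP [/andP [-> _] _].
have third : forall p q : S, exists r, r != p /\ r != q.
  move=> p q.
  case: (boolP ((a != p) && (a != q))) => [/andP[]|Ha]; first by exists a.
  case: (boolP ((b != p) && (b != q))) => [/andP[]|Hb]; first by exists b.
  case: (boolP ((c != p) && (c != q))) => [/andP[]|Hc]; first by exists c.
  exfalso; move: Ha Hb Hc ab ac bc; rewrite !negb_and !negbK.
  by case/orP=>/eqP->; case/orP=>/eqP->; case/orP=>/eqP->; rewrite ?eqxx.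
have E1 : map (fs c a) (f [::c]) = map (fs c a) (f [::a]).
  rewrite -!mor_sub; apply: (rcp_mor Hr).
  by rewrite !mor_sub /= /fs eqxx (negbTE ac).
have E2 : map (fs c b) (f [::c]) = map (fs c b) (f [::b]).
  rewrite -!mor_sub; apply: (rcp_mor Hr).
  by rewrite !mor_sub /= /fs eqxx (negbTE bc).
have E3 : map (fs a b) (f [::a]) = map (fs a b) (f [::b]).
  rewrite -!mor_sub; apply: (rcp_mor Hr).
  by rewrite !mor_sub /= /fs eqxx eq_sym (negbTE ab).
set t := tmpl c a (f [::c]) (f [::a]).
have [Hc Ha] := build ab ac bc E1 E2 E3.
have Hl : forall x, f [::x] = ev t [::x].
  move=> x; case: (eqVneq x c) => [->|xc]; first by rewrite Hc.
  case: (eqVneq x a) => [->|xa]; first by rewrite Ha.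
  apply: (inj_src (x:=x) (y:=a) (z:=c)) => //; try by rewrite eq_sym.
    rewrite -!mor_sub; apply: (transfer (v := [::a]) Hr); last by rewrite Ha.
    by rewrite !mor_sub /= /fs eqxx (negbTE xa).
  rewrite -!mor_sub; apply: (transfer (v := [::c]) Hr); last by rewrite Hc.
  by rewrite !mor_sub /= /fs eqxx (negbTE xc).
have He : f [::] = ev t [::].
  apply: (inj_era third) => r; apply: (transfer (v := [::r]) Hr); last exact: Hl.
  by rewrite /mor /= /era eqxx.
exists t.
suff H : forall n u, size u <= n -> f u = ev t u by move=> u; exact: (H (size u) u (leqnn _)).
elim=> [|n IH] u.
  by rewrite leqn0 size_eq0 => /eqP ->.
rewrite leq_eqVlt ltnS => /orP [/eqP su|]; last exact: IH.
have HA : forall w, size w = n.+1 -> (exists p x y q, w = p ++ x :: y :: q /\ x != y) ->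
    f w = ev t w.
  move=> w sw [p [x [y [q [Ew xy]]]]].
  case: (third x y) => z [zx zy].
  apply: (inj_pair xy zx zy).
    apply: (transfer (v := p ++ z :: q) Hr).
      by rewrite Ew !mor_cat !mor_cons /subw [x == z]eq_sym (negbTE zx) [y == z]eq_sym (negbTE zy) eqxx.
    apply: IH; rewrite Ew !size_cat /= in sw *.
    by rewrite -ltnS -sw !addnS.
  apply: (transfer (v := mor (era x) w) Hr); first by rewrite era_idem.
  apply: IH; rewrite Ew mor_cat size_cat mor_cons {2}/era eqxx cat0s; apply: leq_trans (leq_add (size_era x p) (size_era x (y :: q))) _.
  rewrite Ew size_cat /= in sw.
  by rewrite -ltnS -sw !addnS.
case: (adj_or_const u) => [D|[[x Hx]|u0]]; [exact: HA | | by rewrite u0 in su].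
rewrite su in Hx; rewrite Hx; rewrite Hx in su.
case: n IH su HA Hx => [|n] IH su HA Hx; first by rewrite Hl.
case: (third x x) => y [yx _]; case: (third x y) => z [zx zy].
apply: (inj_src (x:=x) (y:=y) (z:=z)) => //; try by rewrite eq_sym.
  rewrite -!mor_sub; apply: (transfer (v := nseq n.+1 x ++ [:: y]) Hr).
    rewrite !mor_sub map_cat !map_nseq /= /fs eqxx [x == y]eq_sym (negbTE yx).
    by rewrite -(nseqS_cat n x [::]) cats0.
  apply: HA; first by rewrite size_cat size_nseq addn1.
  exists (nseq n x), x, y, [::]; split; [by rewrite nseqS_cat | by rewrite eq_sym].
rewrite -!mor_sub; apply: (transfer (v := nseq n.+1 x ++ [:: z]) Hr).
  rewrite !mor_sub map_cat !map_nseq /= /fs eqxx [x == z]eq_sym (negbTE zx).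
  by rewrite -(nseqS_cat n x [::]) cats0.
apply: HA; first by rewrite size_cat size_nseq addn1.
exists (nseq n x), x, z, [::]; split; [by rewrite nseqS_cat | by rewrite eq_sym].
Qed.

Theorem mainTheorem4 (Sigma : finType) (hSigma : 3 <= #|Sigma|)
  (f : seq Sigma -> seq Sigma) :
  congruence_preserving f <-> RCP f.
Proof.
split.
- move=> Hcp phi [H0 Hc] u v Huv.
  apply: (Hcp (fun x y => phi x = phi y)) => //.
  split=> //.
  + by move=> x y z /= E E'; rewrite E E'.
  + by move=> x y x' y' /= E E'; rewrite !Hc E E'.
- move=> Hr; have [t Ht] := poly_of_RCP hSigma Hr.
  move=> R HR u v Huv; rewrite !Ht; exact: ev_cong.
Qed.
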